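(* In the game $\mathcal{B}_0(120,6)$, every pure strategy $s\in S$ that allocates a positive number of units to at most two battlefields (i.e. $|\{k:s_k>0\}|\le 2$) is not used with positive probability in any Nash equilibrium.
   Context: Fix integers $N\ge1$, $K\ge2$ and a real number $\alpha$. The Colonel Blotto game $\mathcal{B}_\alpha(N,K)$ is the two-player simultaneous-move game with players $A,B$, each with pure strategy set $S=\{s\in\{0,1,\ldots,N\}^K:\sum_{k=1}^K s_k=N\}$, in which the payoff of player $i$ at the pure profile $(s^i,s^{-i})$ is $\pi^i(s^i,s^{-i})=\sum_{k=1}^K\big(\mathbf 1[s^i_k>s^{-i}_k]+\tfrac{\alpha}{2}\mathbf 1[s^i_k=s^{-i}_k]\big)$. Mixed strategies are probability distributions on $S$, with expected payoffs under independent randomization; a Nash equilibrium is a mixed profile from which no unilateral deviation raises a player's expected payoff. *)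

(* Defs.v *)
From HB Require Import structures.
From mathcomp Require Import all_boot all_order all_algebra.
From mathcomp Require Import reals.
Set Implicit Arguments. Unset Strict Implicit. Unset Printing Implicit Defensive.
Import Order.TTheory GRing.Theory Num.Theory.
Local Open Scope ring_scope.

Definition strat (N K : nat) : predArgType :=
  {f : {ffun 'I_K -> 'I_N.+1} | (\sum_(k < K) (f k : nat) == N)%N}.

Definition alloc (N K : nat) (s : strat N K) (k : 'I_K) : nat := val s k.

Definition payoff (R : realType) (alpha : R) (N K : nat) (s t : strat N K) : R :=
  \sum_(k < K) (((alloc t k < alloc s k)%N)%:R
                + alpha / 2%:R * ((alloc s k == alloc t k))%:R).

Definition is_mixed (R : realType) (N K : nat) (p : {ffun strat N K -> R}) : Prop :=
  (forall s, 0 <= p s) /\ \sum_(s : strat N K) p s = 1.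

Definition exp_payoff (R : realType) (alpha : R) (N K : nat)
  (p q : {ffun strat N K -> R}) : R :=
  \sum_(s : strat N K) \sum_(t : strat N K) p s * q t * payoff alpha s t.

Definition nash (R : realType) (alpha : R) (N K : nat)
  (pA pB : {ffun strat N K -> R}) : Prop :=
  [/\ is_mixed pA, is_mixed pB,
      (forall p, is_mixed p -> exp_payoff alpha p pB <= exp_payoff alpha pA pB)
    & (forall q, is_mixed q -> exp_payoff alpha q pA <= exp_payoff alpha pB pA)].

(* Main.v *)
Require Import Defs.
From HB Require Import structures.
From mathcomp Require Import all_boot all_order all_algebra.
From mathcomp Require Import reals.
From mathcomp Require Import ring lra zify.
From Stdlib Require Import Lia.
Import Order.TTheory GRing.Theory Num.Theory.
Local Open Scope ring_scope.

Definition vv n := nth 0%N [:: 1;6;13;22;33;45]%N n.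

Lemma vv_le n : (vv n <= 45)%N.
Proof. by do 6! case: n => [|n] //; rewrite /vv nth_default. Qed.

Lemma key (x : nat) (k : 'I_6) :
  (40 <= 9 * (\sum_(r<6) (x < vv ((k + r) %% 6)):nat) + x)%N.
Proof.
case: (leqP 40 x) => hx; first exact: leq_trans hx (leq_addl _ _).
rewrite !big_ord_recl big_ord0 /=.
case: k => -[|[|[|[|[|[|]]]]]] //= _;
do 40! (case: x hx => [|x] //= hx).
Qed.

Definition dfun (r : 'I_6) : {ffun 'I_6 -> 'I_121} :=
  [ffun k : 'I_6 => inord (vv ((k + r) %% 6))].

Lemma dfunE r k : (dfun r k : nat) = vv ((k + r) %% 6).
Proof. by rewrite /dfun ffunE inordK // ltnS (leq_trans (vv_le _)). Qed.

Lemma dsum r : (\sum_(k < 6) (dfun r k : nat) == 120)%N.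
Proof.
rewrite !big_ord_recl big_ord0 !dfunE /=.
by case: r => -[|[|[|[|[|[|]]]]]].
Qed.

Definition dstr (r : 'I_6) : strat 120 6 := exist _ (dfun r) (dsum r).

Lemma alloc_d r k : alloc (dstr r) k = vv ((k + r) %% 6).
Proof. exact: dfunE. Qed.

Lemma payoff0 (R : realType) N K (s t : strat N K) :
  payoff (0 : R) s t = (\sum_(k < K) nat_of_bool (alloc t k < alloc s k))%:R.
Proof.
rewrite /payoff natr_sum; apply: eq_bigr => k _.
by rewrite mul0r mul0r addr0.
Qed.

Lemma dominance (s t : strat 120 6) :
  (#|[set k : 'I_6 | (0 < alloc s k)%N]| <= 2)%N ->
  (6 * (\sum_(k < 6) nat_of_bool (alloc t k < alloc s k)) + 1 <=
   \sum_(r < 6) \sum_(k < 6) nat_of_bool (alloc t k < alloc (dstr r) k))%N.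
Proof.
move=> hs.
have h1 : (\sum_(k < 6) nat_of_bool (alloc t k < alloc s k) <= 2)%N.
  apply: (leq_trans _ hs); rewrite -sum1_card [X in (_ <= X)%N]big_mkcond /=.
  apply: leq_sum => k _; rewrite inE.
  by case: (alloc s k) (alloc t k) => [|n] [|m] //=; case: (_ < _)%N.
rewrite exchange_big /=.
have hG : (\sum_(k < 6) 40 <= \sum_(k < 6) (9 * (\sum_(r<6) nat_of_bool (alloc t k < vv ((k + r) %% 6))) + alloc t k))%N.
  by apply: leq_sum => k _; exact: key.
rewrite big_split /= -big_distrr /= sum_nat_const card_ord in hG.
have ht : (\sum_(k < 6) alloc t k = 120)%N by exact: (eqP (valP t)).
rewrite ht in hG.
have -> : (\sum_(k < 6) \sum_(r < 6) nat_of_bool (alloc t k < alloc (dstr r) k) =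
   \sum_(k < 6) \sum_(r < 6) nat_of_bool (alloc t k < vv ((k + r) %% 6)))%N.
  by apply: eq_bigr => k _; apply: eq_bigr => r _; rewrite alloc_d.
move: hG h1.
set G := (\sum_(i < 6) _)%N; set H := (\sum_(i < 6) _)%N.
move=> hG h1.
lia.
Qed.


Section Dev.
Variable R : realType.
Notation S := (strat 120 6).

Lemma sum_delta (F : S -> R) (d : S) : \sum_x (x == d)%:R * F x = F d.
Proof.
rewrite (bigD1 d) //= eqxx mul1r big1 ?addr0 // => x /negbTE ->.
by rewrite mul0r.
Qed.

Lemma sum_delta1 (d : S) : \sum_x ((x == d)%:R : R) = 1.
Proof.
rewrite (bigD1 d) //= eqxx big1 ?addr0 // => x /negbTE ->.
by [].
Qed.

Lemma dev (p q : {ffun S -> R}) (s : S) :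
  is_mixed p -> is_mixed q ->
  (forall p', is_mixed p' -> exp_payoff 0 p' q <= exp_payoff 0 p q) ->
  (forall t, 6 * payoff (0 : R) s t + 1 <= \sum_(r<6) payoff (0 : R) (dstr r) t) ->
  p s = 0.
Proof.
move=> [p0 p1] [q0 q1] hN hD.
pose W x := \sum_t q t * payoff (0 : R) x t.
have E : forall p0, exp_payoff 0 p0 q = \sum_x p0 x * W x.
  move=> p2; rewrite /exp_payoff; apply: eq_bigr => x _; rewrite mulr_sumr.
  by apply: eq_bigr => t _; rewrite mulrA.
pose c := p s / 6.
pose p' := [ffun x => p x - p s * (x == s)%:R + c * \sum_(r<6) (x == dstr r)%:R].
have ps0 := p0 s.
have c0 : 0 <= c by rewrite /c; apply: divr_ge0.
have mix : is_mixed p'.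
  split.
  - move=> x; rewrite ffunE; apply: addr_ge0.
      by case: eqP => [->|_]; rewrite ?mulr1 ?subrr // mulr0 subr0.
    by apply: mulr_ge0 => //; apply: sumr_ge0 => r _; apply: ler0n.
  - under eq_bigr do rewrite ffunE.
    rewrite big_split /= sumrB -mulr_sumr -mulr_sumr exchange_big /= p1 sum_delta1.
    under eq_bigr do rewrite sum_delta1.
    rewrite sumr_const card_ord /c.
    have -> : (1 *+ 6 : R) = 6 by [].
    by field.
have hE := hN p' mix.
rewrite !E in hE.
have hE' : \sum_x p' x * W x =
   \sum_x p x * W x - p s * W s + c * \sum_(r<6) W (dstr r).
  under eq_bigr do rewrite ffunE mulrDl mulrBl.
  rewrite big_split /= sumrB.
  under [X in _ - X + _]eq_bigr do rewrite -mulrA.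
  rewrite -mulr_sumr [X in _ - _ * X + _](_ : _ = W s); last exact: sum_delta.
  under [X in _ + X]eq_bigr do rewrite -mulrA mulr_suml.
  rewrite -mulr_sumr exchange_big /=.
  congr (_ + _ * _); apply: eq_bigr => r _; exact: sum_delta.
have hX : 6 * W s + 1 <= \sum_(r<6) W (dstr r).
  rewrite /W exchange_big /=.
  under [X in _ <= X]eq_bigr do rewrite -mulr_sumr.
  apply: (@le_trans _ _ (\sum_t q t * (6 * payoff (0 : R) s t + 1))).
    rewrite le_eqVlt; apply/orP; left; apply/eqP; symmetry.
    rewrite /W mulr_sumr; under eq_bigr do rewrite mulrDr mulr1.
    rewrite big_split /= q1; congr (_ + 1); apply: eq_bigr => t _; ring.
  by apply: ler_sum => t _; apply: ler_wpM2l.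
rewrite hE' in hE.
move: hE hX ps0; rewrite /c.
set a := p s; set X := \sum_(r<6) _; set Y := W s; set Z := \sum_x _.
move=> hE hX ha.
have hP : 0 <= a * (X - 6 * Y - 1) by apply: mulr_ge0 => //; lra.
apply/eqP; rewrite eq_le ha andbT.
nra.
Qed.

End Dev.

Theorem corollary2 (R : realType) (pA pB : {ffun strat 120 6 -> R}) :
  nash (0 : R) pA pB ->
  forall s : strat 120 6,
    (#|[set k : 'I_6 | (0 < alloc s k)%N]| <= 2)%N ->
    pA s = 0 /\ pB s = 0.
Proof.
case=> mA mB hA hB s hs.
have hD : forall t, 6 * payoff (0 : R) s t + 1 <= \sum_(r<6) payoff (0 : R) (dstr r) t.
  move=> t; have := @dominance s t hs.
  under [X in _ <= X]eq_bigr do rewrite payoff0.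
  rewrite payoff0 -natr_sum -(ler_nat R) => h.
  apply: le_trans h; by rewrite natrD natrM.
by split; [apply: (@dev R _ _ _ mA mB hA hD) | apply: (@dev R _ _ _ mB mA hB hD)].
Qed.
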